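(* Let $q,m,p,n\ge1$, let $\mathcal{L}:\mathbb{R}^q\to\mathbb{R}$ be differentiable, $\eta>0$, $K\ge1$, $\omega^{(0)}\in\mathbb{R}^q$, and $\omega^{(k+1)}=\omega^{(k)}-\eta\nabla\mathcal{L}(\omega^{(k)})$ for $k=0,\dots,K-1$. Let $\Phi:\mathbb{R}^q\to\mathbb{R}^{m\times p}$ satisfy $\|\Phi(\omega)-\Phi(\omega')\|\le G\|\omega-\omega'\|$, and let $A:\mathbb{R}^q\to\mathbb{R}^{n\times p}$ satisfy $\|A(\omega)-A(\omega')\|\le\beta\|\Phi(\omega)-\Phi(\omega')\|$ for all $\omega,\omega'\in\mathbb{R}^q$. Let $b\in\mathbb{R}^n$, $\lambda\ge0$, and define \[ E_{\mathrm{phys}}(\omega):=\big\|\big(I_n-A(\omega)(A(\omega)^\top A(\omega)+\lambda I_p)^{-1}A(\omega)^\top\big)b\big\|_2 . \] Assume either $\lambda>0$, or $\lambda=0$ and $\sigma_{\min}(A(\omega^{(k)}))\ge\gamma>0$ for all $0\le k\le K$. Then there is a constant $C_{\mathrm{cond}}\ge1$, depending only on $\lambda$ (resp. $\gamma$), on $\max_{0\le k\le K}\|A(\omega^{(k)})\|$ and on $\|b\|_2$, such that \[ E_{\mathrm{phys}}(\omega^{(K)})\le E_{\mathrm{phys}}(\omega^{(0)})+C_{\mathrm{cond}}\sum_{k=0}^{K-1}\big\|A(\omega^{(k+1)})-A(\omega^{(k)})\big\|\le E_{\mathrm{phys}}(\omega^{(0)})+C_{\mathrm{cond}}\,\beta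 G\sum_{k=0}^{K-1}\big\|\omega^{(k+1)}-\omega^{(k)}\big\|, \] and consequently \[ E_{\mathrm{phys}}(\omega^{(K)})\le E_{\mathrm{phys}}(\omega^{(0)})+C_{\mathrm{cond}}\,\beta G\,\sqrt{K}\Big(\sum_{k=0}^{K-1}\big\|\omega^{(k+1)}-\omega^{(k)}\big\|^2\Big)^{1/2}. \]
   Context: $\|\cdot\|$ is the Euclidean norm on vectors and the spectral norm on matrices; $\sigma_{\min}$ is the smallest of the $p$ singular values. Interpretation: $\omega$ are network parameters up to the penultimate layer, $\Phi(\omega)$ the penultimate-feature design matrix, and $A(\omega)\theta=b$ the linear system obtained by linearizing the PDE, boundary and initial conditions of a task in the last-layer weights $\theta$; the physics-informed head is $\theta^\ast(\omega)=(A(\omega)^\top A(\omega)+\lambda I)^{-1}A(\omega)^\top b$. When $\lambda=0$ (full column rank), $E_{\mathrm{phys}}(\omega)=\min_\theta\|A(\omega)\theta-b\|_2$. *)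

(* Defs.v *)
From HB Require Import structures.
From mathcomp Require Import all_boot all_order all_algebra.
From mathcomp Require Import all_classical all_reals all_analysis.
Set Implicit Arguments. Unset Strict Implicit. Unset Printing Implicit Defensive.
Import Order.TTheory GRing.Theory Num.Theory.
Import numFieldNormedType.Exports.
Local Open Scope classical_set_scope.
Local Open Scope ring_scope.

Definition vnorm (R : realType) (k : nat) (v : 'cV[R]_k) : R :=
  Num.sqrt (\sum_(i < k) (v i 0) ^+ 2).

Definition specnorm (R : realType) (n p : nat) (M : 'M[R]_(n, p)) : R :=
  sup [set vnorm (M *m x) | x in [set x : 'cV[R]_p | vnorm x <= 1]].

(* Smallest of the p singular values of M : 'M_(n,p)
   (variational / Courant-Fischer form: min over unit vectors of |M x|). *)
Definition sigma_min (R : realType) (n p : nat) (M : 'M[R]_(n, p)) : R :=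
  inf [set vnorm (M *m x) | x in [set x : 'cV[R]_p | vnorm x = 1]].

Definition grad (R : realType) (q : nat) (L : 'cV[R]_q -> R^o) (w : 'cV[R]_q)
  : 'cV[R]_q := \col_(i < q) ('d L w (delta_mx i 0)).

Definition Ephys (R : realType) (n p : nat) (lam : R) (A : 'M[R]_(n, p))
  (b : 'cV[R]_n) : R :=
  vnorm ((1%:M - A *m invmx (A^T *m A + lam%:M) *m A^T) *m b).

(* Main.v *)
Require Import Defs.
From HB Require Import structures.
From mathcomp Require Import all_boot all_order all_algebra.
From mathcomp Require Import all_classical all_reals all_analysis.
From mathcomp Require Import lra.
Import Order.TTheory GRing.Theory Num.Theory.
Import numFieldNormedType.Exports.
Local Open Scope classical_set_scope.
Local Open Scope ring_scope.
Set Implicit Arguments. Unset Strict Implicit. Unset Printing Implicit Defensive.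
Definition dot (R : realType) (k : nat) (u v : 'cV[R]_k) : R := (u^T *m v) 0 0.

Lemma dotE (R : realType) (k : nat) (u v : 'cV[R]_k) :
  dot u v = \sum_(i < k) u i 0 * v i 0.
Proof. by rewrite /dot !mxE; apply: eq_bigr => i _; rewrite !mxE. Qed.

Lemma dotC (R : realType) (k : nat) (u v : 'cV[R]_k) : dot u v = dot v u.
Proof. by rewrite !dotE; apply: eq_bigr => i _; rewrite mulrC. Qed.

Lemma dotDr (R : realType) (k : nat) (u v w : 'cV[R]_k) :
  dot u (v + w) = dot u v + dot u w.
Proof. by rewrite /dot mulmxDr mxE. Qed.

Lemma dotNr (R : realType) (k : nat) (u v : 'cV[R]_k) :
  dot u (- v) = - dot u v.
Proof. by rewrite /dot mulmxN mxE. Qed.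

Lemma dotBr (R : realType) (k : nat) (u v w : 'cV[R]_k) :
  dot u (v - w) = dot u v - dot u w.
Proof. by rewrite dotDr dotNr. Qed.

Lemma dotZr (R : realType) (k : nat) (a : R) (u v : 'cV[R]_k) :
  dot u (a *: v) = a * dot u v.
Proof. by rewrite /dot -scalemxAr mxE. Qed.

Lemma dotDl (R : realType) (k : nat) (u v w : 'cV[R]_k) :
  dot (v + w) u = dot v u + dot w u.
Proof. by rewrite dotC dotDr !(dotC u). Qed.

Lemma dotNl (R : realType) (k : nat) (u v : 'cV[R]_k) :
  dot (- v) u = - dot v u.
Proof. by rewrite dotC dotNr dotC. Qed.

Lemma dotBl (R : realType) (k : nat) (u v w : 'cV[R]_k) :
  dot (v - w) u = dot v u - dot w u.
Proof. by rewrite dotDl dotNl. Qed.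

Lemma dotZl (R : realType) (k : nat) (a : R) (u v : 'cV[R]_k) :
  dot (a *: v) u = a * dot v u.
Proof. by rewrite dotC dotZr dotC. Qed.

Lemma dot_mul (R : realType) (k l : nat) (M : 'M[R]_(k, l)) (u : 'cV[R]_l) (v : 'cV[R]_k) :
  dot (M *m u) v = dot u (M^T *m v).
Proof. by rewrite /dot trmx_mul mulmxA. Qed.

Lemma dot_ge0 (R : realType) (k : nat) (u : 'cV[R]_k) : 0 <= dot u u.
Proof. by rewrite dotE; apply: sumr_ge0 => i _; rewrite -expr2 sqr_ge0. Qed.

Lemma dot_eq0 (R : realType) (k : nat) (u : 'cV[R]_k) : dot u u = 0 -> u = 0.
Proof.
rewrite dotE => /psumr_eq0P H; apply/matrixP => i j; rewrite (ord1 j) mxE.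
have := H (fun i _ => ltac:(by rewrite -expr2 sqr_ge0)) i isT; move/eqP.
by rewrite -expr2 sqrf_eq0 => /eqP.
Qed.

Lemma vnorm_dot (R : realType) (k : nat) (u : 'cV[R]_k) : vnorm u = Num.sqrt (dot u u).
Proof. by rewrite /vnorm dotE; congr Num.sqrt; apply: eq_bigr => i _; rewrite expr2. Qed.

Lemma vnorm_ge0 (R : realType) (k : nat) (u : 'cV[R]_k) : 0 <= vnorm u.
Proof. by rewrite /vnorm sqrtr_ge0. Qed.

Lemma vnorm_sq (R : realType) (k : nat) (u : 'cV[R]_k) : vnorm u ^+ 2 = dot u u.
Proof. by rewrite vnorm_dot sqr_sqrtr // dot_ge0. Qed.

Lemma vnorm_eq0 (R : realType) (k : nat) (u : 'cV[R]_k) : vnorm u = 0 -> u = 0.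
Proof. by move=> H; apply: dot_eq0; rewrite -vnorm_sq H expr0n. Qed.

Lemma sq_le (R : realType) (a c : R) : 0 <= a -> 0 <= c -> a ^+ 2 <= c ^+ 2 -> a <= c.
Proof. move=> a0 c0; rewrite -ler_sqrt ?sqrtr_sqr ?ger0_norm //; exact: sqr_ge0. Qed.

Lemma dot0l (R : realType) (k : nat) (v : 'cV[R]_k) : dot 0 v = 0.
Proof. by rewrite dotE big1 // => i _; rewrite mxE mul0r. Qed.

Lemma CS (R : realType) (k : nat) (u v : 'cV[R]_k) : dot u v <= vnorm u * vnorm v.
Proof.
have [/vnorm_eq0 ->|a_neq0] := eqVneq (vnorm u) 0.
  by rewrite dot0l mulr_ge0 // vnorm_ge0.
have [/vnorm_eq0 ->|c_neq0] := eqVneq (vnorm v) 0.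
  by rewrite dotC dot0l mulr_ge0 // vnorm_ge0.
have H := dot_ge0 (vnorm v *: u - vnorm u *: v).
rewrite dotBl !dotBr !dotZl !dotZr -!vnorm_sq (dotC v u) in H.
move: a_neq0 c_neq0 H.
set a := vnorm u; set c := vnorm v => a_neq0 c_neq0 H.
have a0 : 0 <= a by exact: vnorm_ge0.
have c0 : 0 <= c by exact: vnorm_ge0.
have ac : 0 < a * c by rewrite mulr_gt0 // lt0r ?a_neq0 ?c_neq0.
have : (a * c) * dot u v <= (a * c) * (a * c) by nra.
by rewrite ler_pM2l.
Qed.

Lemma vnormD (R : realType) (k : nat) (u v : 'cV[R]_k) : vnorm (u + v) <= vnorm u + vnorm v.
Proof.
apply: sq_le; rewrite ?addr_ge0 ?vnorm_ge0 //.
rewrite vnorm_sq dotDl !dotDr -!vnorm_sq (dotC v u).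
have := CS u v; have := vnorm_ge0 u; have := vnorm_ge0 v; nra.
Qed.

Lemma vnormN (R : realType) (k : nat) (u : 'cV[R]_k) : vnorm (- u) = vnorm u.
Proof. by rewrite !vnorm_dot dotNl dotNr opprK. Qed.

Lemma vnormZ (R : realType) (k : nat) (a : R) (u : 'cV[R]_k) : vnorm (a *: u) = `|a| * vnorm u.
Proof.
by rewrite !vnorm_dot dotZl dotZr mulrA sqrtrM ?sqr_ge0 // -expr2 sqrtr_sqr.
Qed.

Lemma vnormB (R : realType) (k : nat) (u v : 'cV[R]_k) : vnorm u - vnorm v <= vnorm (u - v).
Proof. have := vnormD (u - v) v; rewrite subrK; lra. Qed.

Lemma vnorm0 (R : realType) (k : nat) : vnorm (0 : 'cV[R]_k) = 0.
Proof. by rewrite /vnorm big1 ?sqrtr0 // => i _; rewrite mxE expr0n. Qed.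

Lemma dot_sq (R : realType) (k : nat) (u v : 'cV[R]_k) :
  dot u v ^+ 2 <= vnorm u ^+ 2 * vnorm v ^+ 2.
Proof.
have h1 := CS u v; have h2 := CS u (- v).
rewrite dotNr vnormN in h2.
have := vnorm_ge0 u; have := vnorm_ge0 v; nra.
Qed.

Lemma mulmx_dot (R : realType) (k l : nat) (M : 'M[R]_(k, l)) (x : 'cV[R]_l) i :
  (M *m x) i 0 = dot (row i M)^T x.
Proof. by rewrite dotE mxE; apply: eq_bigr => j _; rewrite !mxE. Qed.

Lemma mx_bound (R : realType) (k l : nat) (M : 'M[R]_(k, l)) :
  exists B : R, 0 <= B /\ forall x, vnorm (M *m x) <= B * vnorm x.
Proof.
set F := \sum_(i < k) vnorm (row i M)^T ^+ 2.
have F0 : 0 <= F by apply: sumr_ge0 => i _; rewrite sqr_ge0.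
exists (Num.sqrt F); split; first exact: sqrtr_ge0.
move=> x; apply: sq_le; rewrite ?mulr_ge0 ?sqrtr_ge0 ?vnorm_ge0 //.
rewrite exprMn (sqr_sqrtr F0) [X in X <= _]vnorm_sq dotE /F mulr_suml.
apply: ler_sum => i _; rewrite -expr2 mulmx_dot; exact: dot_sq.
Qed.

Lemma mulmxZr (R : realType) (k l : nat) (M : 'M[R]_(k, l)) (a : R) (x : 'cV[R]_l) :
  M *m (a *: x) = a *: (M *m x).
Proof. by rewrite scalemxAr. Qed.

Lemma normalize (R : realType) (k : nat) (x : 'cV[R]_k) :
  vnorm x != 0 -> vnorm ((vnorm x)^-1 *: x) = 1.
Proof.
move=> h; rewrite vnormZ ger0_norm ?invr_ge0 ?vnorm_ge0 // mulVf //.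
Qed.

Lemma spec_ub (R : realType) (k l : nat) (M : 'M[R]_(k, l)) (x : 'cV[R]_l) :
  vnorm (M *m x) <= specnorm M * vnorm x.
Proof.
have [B [B0 HB]] := mx_bound M.
have hs : has_sup [set vnorm (M *m x) | x in [set x : 'cV[R]_l | vnorm x <= 1]].
  split; first by exists (vnorm (M *m 0)), 0 => //=; rewrite /vnorm big1 ?sqrtr0 // => i _; rewrite mxE expr0n.
  exists B => _ [y /= hy <-]; apply: (le_trans (HB y)).
  by rewrite -[leRHS]mulr1 ler_wpM2l.
have [/vnorm_eq0 ->|xn0] := eqVneq (vnorm x) 0.
  by rewrite mulmx0 !vnorm0 mulr0.
have hx : [set vnorm (M *m x) | x in [set x : 'cV[R]_l | vnorm x <= 1]] (vnorm (M *m ((vnorm x)^-1 *: x))).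
  by exists ((vnorm x)^-1 *: x) => //=; rewrite normalize.
have := sup_upper_bound hs hx; rewrite -/(specnorm M).
rewrite mulmxZr vnormZ ger0_norm ?invr_ge0 ?vnorm_ge0 //.
have xp : 0 < vnorm x by rewrite lt0r xn0 vnorm_ge0.
by rewrite ler_pdivrMl // mulrC.
Qed.

Lemma sigma_lb (R : realType) (k l : nat) (M : 'M[R]_(k, l)) (gam : R) (z : 'cV[R]_l) :
  gam <= sigma_min M -> gam * vnorm z <= vnorm (M *m z).
Proof.
move=> hg.
have [/vnorm_eq0 ->|xn0] := eqVneq (vnorm z) 0.
  by rewrite mulmx0 !vnorm0 mulr0.
have hl : has_lbound [set vnorm (M *m x) | x in [set x : 'cV[R]_l | vnorm x = 1]].
  by exists 0 => _ [y _ <-]; exact: vnorm_ge0.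
have hx : [set vnorm (M *m x) | x in [set x : 'cV[R]_l | vnorm x = 1]] (vnorm (M *m ((vnorm z)^-1 *: z))).
  by exists ((vnorm z)^-1 *: z) => //=; rewrite normalize.
have := ge_inf hl hx; rewrite -/(sigma_min M).
rewrite mulmxZr vnormZ ger0_norm ?invr_ge0 ?vnorm_ge0 //.
have xp : 0 < vnorm z by rewrite lt0r xn0 vnorm_ge0.
move=> h; have h2 := le_trans hg h.
apply: (le_trans (ler_wpM2r (vnorm_ge0 z) h2)).
by rewrite mulrC mulrA mulfV ?mul1r.
Qed.

Lemma le_of_sq (R : realType) (a c : R) : 0 <= a -> 0 <= c -> a ^+ 2 <= a * c -> a <= c.
Proof. move=> a0 c0 h; nra. Qed.

Lemma spec_ge0 (R : realType) (k l : nat) (M : 'M[R]_(k, l)) : 0 <= specnorm M.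
Proof.
have [B [B0 HB]] := mx_bound M.
have hs : has_sup [set vnorm (M *m x) | x in [set x : 'cV[R]_l | vnorm x <= 1]].
  split; first by exists (vnorm (M *m 0)), 0 => //=; rewrite /vnorm big1 ?sqrtr0 // => i _; rewrite mxE expr0n.
  exists B => _ [y /= hy <-]; apply: (le_trans (HB y)).
  by rewrite -[leRHS]mulr1 ler_wpM2l.
have hx : [set vnorm (M *m x) | x in [set x : 'cV[R]_l | vnorm x <= 1]] (vnorm (M *m 0)).
  by exists 0 => //=; rewrite vnorm0.
by have := sup_upper_bound hs hx; rewrite mulmx0 vnorm0.
Qed.

Lemma spec_tr (R : realType) (k l : nat) (M : 'M[R]_(k, l)) (x : 'cV[R]_k) :
  vnorm (M^T *m x) <= specnorm M * vnorm x.
Proof.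
apply: le_of_sq; rewrite ?vnorm_ge0 ?mulr_ge0 ?vnorm_ge0 ?spec_ge0 //.
rewrite vnorm_sq dot_mul trmxK dotC.
apply: (le_trans (CS _ _)).
have h := spec_ub M (M^T *m x); have := vnorm_ge0 x; have := vnorm_ge0 (M^T *m x); nra.
Qed.

Definition Nm (R : realType) (n p : nat) (A : 'M[R]_(n, p)) (lam : R) : 'M[R]_p :=
  A^T *m A + lam%:M.

Definition Hk (R : realType) (n p : nat) (A : 'M[R]_(n, p)) (lam kap : R) : Prop :=
  forall z : 'cV[R]_p, vnorm z ^+ 2 <= kap ^+ 2 * (vnorm (A *m z) ^+ 2 + lam * vnorm z ^+ 2).

Lemma Nm_mul (R : realType) (n p : nat) (A : 'M[R]_(n, p)) (lam : R) (z : 'cV[R]_p) :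
  Nm A lam *m z = A^T *m (A *m z) + lam *: z.
Proof. by rewrite /Nm mulmxDl mulmxA mul_scalar_mx. Qed.

Lemma quad (R : realType) (n p : nat) (A : 'M[R]_(n, p)) (lam : R) (z : 'cV[R]_p) :
  dot z (Nm A lam *m z) = vnorm (A *m z) ^+ 2 + lam * vnorm z ^+ 2.
Proof. by rewrite Nm_mul dotDr dotZr -dot_mul !vnorm_sq. Qed.

Lemma Nm_tr (R : realType) (n p : nat) (A : 'M[R]_(n, p)) (lam : R) :
  (Nm A lam)^T = Nm A lam.
Proof. by rewrite /Nm linearD /= trmx_mul trmxK tr_scalar_mx. Qed.

Lemma Nm_unit (R : realType) (n p : nat) (A : 'M[R]_(n, p)) (lam kap : R) :
  Hk A lam kap -> Nm A lam \in unitmx.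
Proof.
move=> H; rewrite unitmxE unitfE; apply/negP => /det0P [v vn0 hv].
have hz : Nm A lam *m v^T = 0 by rewrite -[Nm A lam]Nm_tr -trmx_mul hv trmx0.
have := quad A lam v^T; rewrite hz.
have -> : dot v^T 0 = 0 by rewrite dotC dot0l.
move=> h0; have := H v^T; rewrite -h0 mulr0 => hle.
have : vnorm v^T = 0 by apply/eqP; rewrite -sqrf_eq0 eq_le hle sqr_ge0.
move/vnorm_eq0 => /(congr1 trmx); rewrite trmxK trmx0 => hv0.
by rewrite hv0 eqxx in vn0.
Qed.

Lemma NmK (R : realType) (n p : nat) (A : 'M[R]_(n, p)) (lam kap : R) (u : 'cV[R]_p) :
  Hk A lam kap -> Nm A lam *m (invmx (Nm A lam) *m u) = u.
Proof. by move=> H; rewrite mulmxA mulmxV ?mul1mx // (Nm_unit H). Qed.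

Lemma KNm (R : realType) (n p : nat) (A : 'M[R]_(n, p)) (lam kap : R) (u : 'cV[R]_p) :
  Hk A lam kap -> invmx (Nm A lam) *m (Nm A lam *m u) = u.
Proof. by move=> H; rewrite mulmxA mulVmx ?mul1mx // (Nm_unit H). Qed.

Lemma bound1 (R : realType) (n p : nat) (A : 'M[R]_(n, p)) (lam kap : R) (u : 'cV[R]_p) :
  0 <= lam -> 0 <= kap -> Hk A lam kap ->
  vnorm (A *m (invmx (Nm A lam) *m u)) <= kap * vnorm u.
Proof.
move=> l0 k0 H.
set z := invmx (Nm A lam) *m u.
have hQ := quad A lam z; rewrite (NmK _ H) in hQ.
have hC := CS z u.
have hH := H z.
set a := vnorm (A *m z) in hQ hH *.
set zn := vnorm z in hQ hC hH.
set un := vnorm u in hC *.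
set Q := dot z u in hQ hC.
have a0 : 0 <= a by exact: vnorm_ge0.
have zn0 : 0 <= zn by exact: vnorm_ge0.
have un0 : 0 <= un by exact: vnorm_ge0.
have h1 : zn ^+ 2 <= zn * (kap ^+ 2 * un).
  apply: (le_trans hH); rewrite -hQ mulrCA ler_wpM2l ?sqr_ge0 //.
have h2 : zn <= kap ^+ 2 * un by apply: le_of_sq; rewrite ?mulr_ge0 ?sqr_ge0.
have h3 : Q <= kap ^+ 2 * un ^+ 2.
  apply: (le_trans hC); rewrite expr2 mulrA ler_wpM2r //.
apply: sq_le; rewrite ?mulr_ge0 // exprMn.
apply: le_trans h3; rewrite hQ lerDl mulr_ge0 ?sqr_ge0 //.
Qed.

Lemma bound2 (R : realType) (n p : nat) (A : 'M[R]_(n, p)) (lam kap : R) (b : 'cV[R]_n) :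
  0 <= lam -> 0 <= kap -> Hk A lam kap ->
  vnorm (invmx (Nm A lam) *m (A^T *m b)) <= kap * vnorm b.
Proof.
move=> l0 k0 H.
set z := invmx (Nm A lam) *m (A^T *m b).
have hQ := quad A lam z; rewrite (NmK _ H) -dot_mul in hQ.
have hC := CS (A *m z) b.
have hH := H z.
set a := vnorm (A *m z) in hQ hH hC.
set zn := vnorm z in hQ hH *.
set bn := vnorm b in hC *.
set Q := dot (A *m z) b in hQ hC.
have a0 : 0 <= a by exact: vnorm_ge0.
have zn0 : 0 <= zn by exact: vnorm_ge0.
have bn0 : 0 <= bn by exact: vnorm_ge0.
have h1 : a ^+ 2 <= a * bn.
  apply: le_trans hC; rewrite hQ lerDl mulr_ge0 ?sqr_ge0 //.
have h2 : a <= bn by apply: le_of_sq.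
have h3 : Q <= bn ^+ 2 by apply: (le_trans hC); rewrite expr2 ler_wpM2r.
apply: sq_le; rewrite ?mulr_ge0 // exprMn.
apply: (le_trans hH); rewrite -hQ ler_wpM2l ?sqr_ge0 //.
Qed.

Lemma resid_eq (R : realType) (n p : nat) (A : 'M[R]_(n, p)) (lam : R) (b : 'cV[R]_n) :
  (1%:M - A *m invmx (A^T *m A + lam%:M) *m A^T) *m b
  = b - A *m (invmx (Nm A lam) *m (A^T *m b)).
Proof. by rewrite mulmxBl mul1mx !mulmxA. Qed.

Lemma bound3 (R : realType) (n p : nat) (A : 'M[R]_(n, p)) (lam kap : R) (b : 'cV[R]_n) :
  0 <= lam -> Hk A lam kap ->
  vnorm (b - A *m (invmx (Nm A lam) *m (A^T *m b))) <= vnorm b.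
Proof.
move=> l0 H.
set y := invmx (Nm A lam) *m (A^T *m b).
have hQ := quad A lam y; rewrite (NmK _ H) -dot_mul in hQ.
apply: sq_le; rewrite ?vnorm_ge0 //.
rewrite vnorm_sq dotBl !dotBr -!vnorm_sq (dotC b) hQ.
have := sqr_ge0 (vnorm (A *m y)); have := sqr_ge0 (vnorm y).
move: (vnorm (A *m y) ^+ 2) (vnorm y ^+ 2) => s t; nra.
Qed.

Lemma main_id (R : realType) (n p : nat) (A1 A2 : 'M[R]_(n, p)) (lam k1 k2 : R) (b : 'cV[R]_n) :
  Hk A1 lam k1 -> Hk A2 lam k2 ->
  let y1 := invmx (Nm A1 lam) *m (A1^T *m b) in
  let y2 := invmx (Nm A2 lam) *m (A2^T *m b) in
  let r1 := b - A1 *m y1 in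
  let r2 := b - A2 *m y2 in
  r1 - r2 = A2 *m (invmx (Nm A2 lam) *m ((A2 - A1)^T *m r1))
            + ((A2 - A1) *m y1 - A2 *m (invmx (Nm A2 lam) *m (A2^T *m ((A2 - A1) *m y1)))).
Proof.
move=> H1 H2 y1 y2 r1 r2.
have e1 : A1^T *m (A1 *m y1) + lam *: y1 = A1^T *m b by rewrite -Nm_mul (NmK _ H1).
have br : (A2 - A1)^T *m r1 - A2^T *m ((A2 - A1) *m y1) = A2^T *m b - Nm A2 lam *m y1.
  rewrite Nm_mul (_ : (A2 - A1)^T = A2^T - A1^T); last by apply/matrixP=> i j; rewrite !mxE.
  rewrite !mulmxBl /r1 !mulmxBr.
  move: e1; move: (A2^T *m b) (A2^T *m (A1 *m y1)) (A1^T *m b) (A1^T *m (A1 *m y1)) (A2^T *m (A2 *m y1)) (lam *: y1).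
  move=> a c e f g t he; apply/matrixP => i j; move/matrixP: he => /(_ i j).
  rewrite !mxE => he; lra.
rewrite (addrC ((A2 - A1) *m y1)) addrA -mulmxBr -mulmxBr br mulmxBr (KNm _ H2) -/y2 mulmxBr mulmxBl /r1 /r2.
move: (A2 *m (invmx (Nm A2 lam) *m (A2^T *m b))) (A2 *m y1) (A1 *m y1) => a c e.
apply/matrixP => i j; rewrite !mxE; lra.
Qed.

Lemma Ephys_lip (R : realType) (n p : nat) (A1 A2 : 'M[R]_(n, p)) (lam kap : R) (b : 'cV[R]_n) :
  0 <= lam -> 0 <= kap -> Hk A1 lam kap -> Hk A2 lam kap ->
  Ephys lam A2 b <= Ephys lam A1 b + (2 * kap * vnorm b) * specnorm (A2 - A1).
Proof.
move=> l0 k0 H1 H2.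
rewrite /Ephys !resid_eq.
have id := main_id b H1 H2; simpl in id.
move: id.
set y1 := invmx (Nm A1 lam) *m (A1^T *m b).
set r1 := b - A1 *m y1.
set r2 := b - A2 *m _.
set D := A2 - A1 => id.
have s0 : 0 <= specnorm D by exact: spec_ge0.
have t1 : vnorm (A2 *m (invmx (Nm A2 lam) *m (D^T *m r1))) <= kap * (specnorm D * vnorm b).
  apply: (le_trans (bound1 _ l0 k0 H2)); rewrite ler_wpM2l //.
  apply: (le_trans (spec_tr _ _)); rewrite ler_wpM2l //.
  exact: bound3 l0 H1.
have t2 : vnorm (D *m y1 - A2 *m (invmx (Nm A2 lam) *m (A2^T *m (D *m y1)))) <= specnorm D * (kap * vnorm b).
  apply: (le_trans (bound3 _ l0 H2)).
  apply: (le_trans (spec_ub _ _)); rewrite ler_wpM2l //.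
  exact: bound2 l0 k0 H1.
have hd : vnorm (r1 - r2) <= 2 * kap * vnorm b * specnorm D.
  rewrite id; apply: (le_trans (vnormD _ _)).
  have := vnorm_ge0 b; nra.
have := vnormD r1 (r2 - r1); rewrite addrC subrK -opprB vnormN.
move=> h; apply: (le_trans h); rewrite lerD2l //.
Qed.

Lemma sum_CS (R : realType) (K : nat) (f : 'I_K -> R) :
  \sum_(k < K) f k <= Num.sqrt K%:R * Num.sqrt (\sum_(k < K) f k ^+ 2).
Proof.
have := CS (const_mx 1 : 'cV[R]_K) (\col_k f k).
rewrite dotE /vnorm.
have -> : \sum_(i < K) (const_mx 1 : 'cV[R]_K) i 0 ^+ 2 = K%:R.
  by rewrite (eq_bigr (fun _ => 1)) ?sumr_const ?card_ord // => i _; rewrite mxE expr1n.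
rewrite (eq_bigr (fun k => f k)); last by move=> i _; rewrite !mxE mul1r.
rewrite [X in _ -> _ <= _ * Num.sqrt X](eq_bigr (fun k => (\col_k f k) k 0 ^+ 2)) //.
by move=> i _; rewrite !mxE.
Qed.

Lemma telescope (R : realType) (q n p : nat) (K : nat) (w : nat -> 'cV[R]_q)
  (A : 'cV[R]_q -> 'M[R]_(n, p)) (b : 'cV[R]_n) (lam kap C : R) :
  0 <= lam -> 0 <= kap -> 2 * kap * vnorm b <= C ->
  (forall k, (k <= K)%N -> Hk (A (w k)) lam kap) ->
  Ephys lam (A (w K)) b <= Ephys lam (A (w 0%N)) b
     + C * \sum_(k < K) specnorm (A (w k.+1) - A (w k)).
Proof.
move=> l0 k0 hC hH.
suff : forall j, (j <= K)%N -> Ephys lam (A (w j)) b <= Ephys lam (A (w 0%N)) b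
     + C * \sum_(k < j) specnorm (A (w k.+1) - A (w k)) by apply.
elim=> [|j IH] hj.
  by rewrite big_ord0 mulr0 addr0.
rewrite big_ord_recr /= mulrDr addrA.
have hj' : (j <= K)%N by apply: ltnW.
apply: (le_trans (Ephys_lip b l0 k0 (hH _ hj') (hH _ hj))).
apply: lerD; first exact: IH.
by rewrite ler_wpM2r // spec_ge0.
Qed.

Theorem theorem2 (R : realType) :
  exists (Creg Cgam : R -> R -> R -> R),
    (forall x y z, 1 <= Creg x y z) /\ (forall x y z, 1 <= Cgam x y z) /\
    forall (q m p n : nat) (L : 'cV[R]_q -> R^o) (eta : R) (K : nat)
      (w : nat -> 'cV[R]_q) (Phi : 'cV[R]_q -> 'M[R]_(m, p))
      (A : 'cV[R]_q -> 'M[R]_(n, p)) (G beta : R) (b : 'cV[R]_n) (lam : R),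
    (1 <= q)%N -> (1 <= m)%N -> (1 <= p)%N -> (1 <= n)%N ->
    (forall x, differentiable L x) ->
    0 < eta -> (1 <= K)%N ->
    (forall k, (k < K)%N -> w k.+1 = w k - eta *: grad L (w k)) ->
    0 <= G -> 0 <= beta ->
    (forall x y, specnorm (Phi x - Phi y) <= G * vnorm (x - y)) ->
    (forall x y, specnorm (A x - A y) <= beta * specnorm (Phi x - Phi y)) ->
    0 <= lam ->
    let E := fun x => Ephys lam (A x) b in
    let Amax := \big[Num.max/0]_(k < K.+1) specnorm (A (w k)) in
    let SA := \sum_(k < K) specnorm (A (w k.+1) - A (w k)) in
    let Sw := \sum_(k < K) vnorm (w k.+1 - w k) in
    let Sw2 := \sum_(k < K) vnorm (w k.+1 - w k) ^+ 2 in
    let concl := fun C : R =>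
      E (w K) <= E (w 0%N) + C * SA /\
      E (w 0%N) + C * SA <= E (w 0%N) + C * beta * G * Sw /\
      E (w K) <= E (w 0%N) + C * beta * G * Num.sqrt K%:R * Num.sqrt Sw2 in
    (0 < lam -> concl (Creg lam Amax (vnorm b))) /\
    (forall gam : R, lam = 0 -> 0 < gam ->
       (forall k, (k <= K)%N -> gam <= sigma_min (A (w k))) ->
       concl (Cgam gam Amax (vnorm b))).
Proof.
exists (fun x _ z => 1 + 2 * (Num.sqrt x)^-1 * `|z|), (fun x _ z => 1 + 2 * `|x|^-1 * `|z|).
split; first by move=> x y z; rewrite lerDl !mulr_ge0 ?invr_ge0 ?sqrtr_ge0.
split; first by move=> x y z; rewrite lerDl !mulr_ge0 ?invr_ge0.
move=> q m p n L eta K w Phi A G beta b lam _ _ _ _ _ _ _ _ G0 b0 hPhi hA l0.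
move=> E Amax SA Sw Sw2 concl.
have gen : forall kap C, 0 <= kap -> 2 * kap * vnorm b <= C ->
    (forall k, (k <= K)%N -> Hk (A (w k)) lam kap) -> concl C.
  move=> kap C k0 hC hH.
  have C0 : 0 <= C by apply: le_trans hC; rewrite !mulr_ge0 ?vnorm_ge0.
  have h1 : E (w K) <= E (w 0%N) + C * SA by exact: telescope l0 k0 hC hH.
  have h2 : SA <= beta * G * Sw.
    rewrite /SA /Sw mulr_sumr; apply: ler_sum => k _.
    apply: (le_trans (hA _ _)); rewrite -mulrA ler_wpM2l //.
  have h3 : Sw <= Num.sqrt K%:R * Num.sqrt Sw2 by exact: sum_CS.
  have h2' : E (w 0%N) + C * SA <= E (w 0%N) + C * beta * G * Sw.
    by rewrite lerD2l -!mulrA ler_wpM2l // mulrA.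
  split=> //; split=> //.
  apply: (le_trans h1); apply: (le_trans h2').
  rewrite lerD2l -!mulrA ler_wpM2l // ler_wpM2l // ler_wpM2l //.
split.
  move=> lp.
  have sl : 0 < Num.sqrt lam by rewrite sqrtr_gt0.
  apply: (gen (Num.sqrt lam)^-1).
  - by rewrite invr_ge0 ltW.
  - by rewrite /= ger0_norm ?vnorm_ge0 //; lra.
  move=> k _ z.
  rewrite mulrDr exprVn (sqr_sqrtr (ltW lp)) [X in _ <= _ + X]mulrA mulVf ?lt0r_neq0 // mul1r.
  by rewrite lerDr mulr_ge0 ?invr_ge0 ?sqr_ge0.
move=> gam l00 gp hg.
apply: (gen gam^-1).
- by rewrite invr_ge0 ltW.
- by rewrite /= (ger0_norm (vnorm_ge0 b)) (ger0_norm (ltW gp)); lra.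
move=> k hk z.
rewrite l00 mul0r addr0.
have := sigma_lb z (hg k hk) => h.
have h2 : (gam * vnorm z) ^+ 2 <= vnorm (A (w k) *m z) ^+ 2.
  by rewrite ler_sqr // ?nnegrE ?mulr_ge0 ?vnorm_ge0 ?ltW.
rewrite exprMn in h2.
rewrite exprVn -[X in X <= _](mul1r) -(mulVf (x := gam ^+ 2)) ?expf_neq0 ?lt0r_neq0 //.
by rewrite -mulrA ler_wpM2l // ?invr_ge0 ?sqr_ge0.
Qed.
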